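(* For all integers $k\geq 1$ and $n\geq 3$ with $(k,n)\neq(1,5)$, $\chi_i(C_{4k}\Box C_n)\leq 6$.
   Context: For a graph $G$, an incidence is a pair $(v,e)$ with $v\in V(G)$, $e\in E(G)$ and $v$ incident with $e$. Two incidences $(v,e)$ and $(w,f)$ are adjacent if $v=w$, or $e=f$, or the edge $vw$ equals $e$ or $f$. An incidence $k$-coloring of $G$ is a map from the set of incidences of $G$ to a set of $k$ colors such that adjacent incidences receive distinct colors; the incidence chromatic number $\chi_i(G)$ is the least such $k$. $C_n$ denotes the cycle on $n$ vertices and $\Box$ the Cartesian product of graphs: $G\Box H$ has vertex set $V(G)\times V(H)$, with $(u_1,v_1)$ adjacent to $(u_2,v_2)$ iff either $u_1=u_2$ and $v_1v_2\in E(H)$, or $v_1=v_2$ and $u_1u_2\in E(G)$. *)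

(* Defs.v *)
From mathcomp Require Import all_boot.
Set Implicit Arguments. Unset Strict Implicit. Unset Printing Implicit Defensive.

(* A simple graph is a symmetric irreflexive relation e on a finite type T. *)

Definition cycle_rel (n : nat) : rel 'I_n :=
  fun i j => (nat_of_ord j == i.+1 %% n) || (nat_of_ord i == j.+1 %% n).

Arguments cycle_rel n : clear implicits.

Definition cart_rel (T U : finType) (eG : rel T) (eH : rel U) : rel (T * U) :=
  fun x y => ((x.1 == y.1) && eH x.2 y.2) || ((x.2 == y.2) && eG x.1 y.1).

(* Edges are represented as 2-element vertex sets {x,y} with x ~ y. *)
Definition is_edge (T : finType) (e : rel T) (E : {set T}) : bool :=
  [exists x, exists y, e x y && (E == [set x; y])].

Definition is_incidence (T : finType) (e : rel T) (p : T * {set T}) : bool :=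
  is_edge e p.2 && (p.1 \in p.2).

Definition inc_adj (T : finType) (p q : T * {set T}) : bool :=
  [|| p.1 == q.1, p.2 == q.2, [set p.1; q.1] == p.2 | [set p.1; q.1] == q.2].

Definition incidence_coloring (T : finType) (e : rel T) (k : nat)
  (c : T * {set T} -> 'I_k) : Prop :=
  forall p q, is_incidence e p -> is_incidence e q -> p != q ->
    inc_adj p q -> c p != c q.

(* chi_i(G) <= k  iff  G admits an incidence k-coloring. *)
Definition incidence_colorable (T : finType) (e : rel T) (k : nat) : Prop :=
  exists c : T * {set T} -> 'I_k, incidence_coloring e c.

(* Main.v *)
Require Import Defs.
From mathcomp Require Import all_boot zify.
Set Implicit Arguments. Unset Strict Implicit.

Definition oth (T : finType) (p : T * {set T}) : T :=
  odflt p.1 [pick u in p.2 | u != p.1].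

Lemma inc_dec (T : finType) (e : rel T) (p : T * {set T}) :
  (forall x y, e x y = e y x) -> (forall x, ~~ e x x) -> is_incidence e p ->
  e p.1 (oth p) /\ p.2 = [set p.1; oth p].
Proof.
move=> esym eirr; case: p => v E; rewrite /is_incidence /is_edge /= => /andP[/existsP[x /existsP[y /andP[exy /eqP EE]]]].
subst E; rewrite /oth /=.
have xy : x != y.
  by apply/eqP => xy; subst y; rewrite (negbTE (eirr x)) in exy.
rewrite in_set2 => vin.
case: pickP => [u /andP[] | H] /=.
- rewrite in_set2 => /orP[] /eqP -> ne.
  + case/orP: vin => /eqP vv; first by rewrite vv eqxx in ne.
    by subst v; rewrite esym exy setUC.
  + case/orP: vin => /eqP vv; last by rewrite vv eqxx in ne.
    by subst v.
- case/orP: vin => /eqP vv; subst v.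
  + by move: (H y); rewrite set22 eq_sym xy.
  + by move: (H x); rewrite set21 xy.
Qed.

Lemma gen_col (T : finType) (e : rel T) (k : nat) (col : T -> T -> 'I_k) :
  (forall x y, e x y = e y x) -> (forall x, ~~ e x x) ->
  (forall v u u', e v u -> e v u' -> u != u' -> col v u != col v u') ->
  (forall a b y, e a b -> e b y -> col a b != col b y) ->
  incidence_colorable e k.
Proof.
move=> esym eirr K0 K; exists (fun p => col p.1 (oth p)).
move=> [v E] [w F] Hp Hq neq adj.
move: (inc_dec esym eirr Hp) (inc_dec esym eirr Hq) => /=.
move: (oth (v, E)) (oth (w, F)) => u x [evu Eq1] [ewx Eq2]; subst E F.
case: (eqVneq v w) => [vw|vw].
  subst w; apply: K0 => //.
  by apply: contraNneq neq => ->.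
move: adj; rewrite /inc_adj /= (negbTE vw) /=.
have wv : w != v by rewrite eq_sym.
case/or3P => /eqP H.
- have : w \in [set v; u] by rewrite H set21.
  rewrite in_set2 (negbTE wv) /= => /eqP wu; subst w.
  have : x \in [set v; u] by rewrite H set22.
  rewrite in_set2 => /orP[] /eqP xv; subst x; last by rewrite (negbTE (eirr u)) in ewx.
  by apply: K => //; rewrite esym.
- have : w \in [set v; u] by rewrite -H set22.
  rewrite in_set2 (negbTE wv) /= => /eqP wu; subst w.
  by apply: K.
- have : v \in [set w; x] by rewrite -H set21.
  rewrite in_set2 (negbTE vw) /= => /eqP vx; subst x.
  by rewrite eq_sym; apply: K.
Qed.

Lemma smod (i m : nat) : i < m -> (i.+1 %% m = i.+1 /\ i.+1 < m) \/ (i.+1 %% m = 0 /\ i.+1 = m).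
Proof.
move=> lt; case: (ltngtP i.+1 m) => h.
- by left; rewrite modn_small.
- lia.
- by right; rewrite h modnn.
Qed.

Definition dirN m n (a1 a2 b1 b2 : nat) : nat :=
  if a1 == b1 then (if b2 == a2.+1 %% n then 2 else 3)
  else (if b1 == a1.+1 %% m then 0 else 1).
Definition adjN m n (a1 a2 b1 b2 : nat) : bool :=
  ((a1 == b1) && ((b2 == a2.+1 %% n) || (a2 == b2.+1 %% n))) ||
  ((a2 == b2) && ((b1 == a1.+1 %% m) || (a1 == b1.+1 %% m))).

Lemma dirN_spec m n a1 a2 b1 b2 : 3 <= m -> 3 <= n -> a1 < m -> b1 < m -> a2 < n -> b2 < n ->
  adjN m n a1 a2 b1 b2 ->
  (dirN m n a1 a2 b1 b2 = 0 /\ (b1 = a1.+1 %% m /\ b2 = a2)) \/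
  (dirN m n a1 a2 b1 b2 = 1 /\ (a1 = b1.+1 %% m /\ a2 = b2)) \/
  (dirN m n a1 a2 b1 b2 = 2 /\ (a1 = b1 /\ b2 = a2.+1 %% n)) \/
  (dirN m n a1 a2 b1 b2 = 3 /\ (a1 = b1 /\ a2 = b2.+1 %% n)).
Proof.
move=> hm hn ha1 hb1 ha2 hb2; rewrite /adjN /dirN.
case/smod: (ha1) => [[-> ?]|[-> ?]]; case/smod: (hb1) => [[-> ?]|[-> ?]];
case/smod: (ha2) => [[-> ?]|[-> ?]]; case/smod: (hb2) => [[-> ?]|[-> ?]];
do ![case: eqP => ? /=]; try done; try lia.
Qed.

Lemma sinj m a b : a < m -> b < m -> a.+1 %% m = b.+1 %% m -> a = b.
Proof. by move=> ha hb; case/smod: (ha) => [[-> ?]|[-> ?]]; case/smod: (hb) => [[-> ?]|[-> ?]]; lia. Qed.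

Lemma sneq n a : 2 <= n -> a < n -> (a == a.+1 %% n) = false.
Proof. by move=> hn ha; case/smod: (ha) => [[-> ?]|[-> ?]]; apply/eqP; lia. Qed.

Lemma cart_adjN m n (x y : 'I_m * 'I_n) :
  cart_rel (cycle_rel m) (cycle_rel n) x y = adjN m n x.1 x.2 y.1 y.2.
Proof. by []. Qed.

Lemma adjN_sym m n a1 a2 b1 b2 : adjN m n a1 a2 b1 b2 = adjN m n b1 b2 a1 a2.
Proof.
rewrite /adjN [b1 == a1]eq_sym [b2 == a2]eq_sym [(a2 == _) || _]orbC [(a1 == _) || _]orbC.
done.
Qed.

Lemma dir_inj m n v1 v2 u1 u2 w1 w2 : 3 <= m -> 3 <= n -> v1 < m -> v2 < n ->
  u1 < m -> u2 < n -> w1 < m -> w2 < n ->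
  adjN m n v1 v2 u1 u2 -> adjN m n v1 v2 w1 w2 ->
  dirN m n v1 v2 u1 u2 = dirN m n v1 v2 w1 w2 -> u1 = w1 /\ u2 = w2.
Proof.
move=> hm hn hv1 hv2 hu1 hu2 hw1 hw2 A1 A2 deq.
case: (dirN_spec hm hn hv1 hu1 hv2 hu2 A1) => [[d1 [e1 e2]]|[[d1 [e1 e2]]|[[d1 [e1 e2]]|[d1 [e1 e2]]]]];
case: (dirN_spec hm hn hv1 hw1 hv2 hw2 A2) => [[d2 [f1 f2]]|[[d2 [f1 f2]]|[[d2 [f1 f2]]|[d2 [f1 f2]]]]];
rewrite d1 d2 in deq; try discriminate.
- by split; congruence.
- by split; [apply: (sinj hu1 hw1); rewrite -e1 -f1 | rewrite -e2 -f2].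
- by split; congruence.
- by split; [rewrite -e1 -f1 | apply: (sinj hu2 hw2); rewrite -e2 -f2].
Qed.

Lemma inord_neq (a b : nat) : a < 6 -> b < 6 -> a != b -> (inord a : 'I_6) != inord b.
Proof.
move=> ha hb; apply: contra => /eqP H; apply/eqP.
by have := congr1 val H; rewrite /= !inordK.
Qed.

Definition tcol m n (g : nat -> nat -> nat -> nat) (v u : 'I_m * 'I_n) : 'I_6 :=
  inord (g v.1 v.2 (dirN m n v.1 v.2 u.1 u.2)).

Lemma dirN_lt4 m n a1 a2 b1 b2 : dirN m n a1 a2 b1 b2 < 4.
Proof. by rewrite /dirN; case: ifP => _; case: ifP. Qed.

Lemma torus m n (g : nat -> nat -> nat -> nat) : 3 <= m -> 3 <= n ->
  (forall i j d, i < m -> j < n -> d < 4 -> g i j d < 6) ->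
  (forall i j d d', i < m -> j < n -> d < 4 -> d' < 4 -> d != d' -> g i j d != g i j d') ->
  (forall i j d, i < m -> j < n -> d < 4 -> g i j 0 != g (i.+1 %% m) j d) ->
  (forall i j d, i < m -> j < n -> d < 4 -> g (i.+1 %% m) j 1 != g i j d) ->
  (forall i j d, i < m -> j < n -> d < 4 -> g i j 2 != g i (j.+1 %% n) d) ->
  (forall i j d, i < m -> j < n -> d < 4 -> g i (j.+1 %% n) 3 != g i j d) ->
  incidence_colorable (cart_rel (cycle_rel m) (cycle_rel n)) 6.
Proof.
move=> hm hn H6 H0 HU HD HR HL.
apply: (@gen_col _ _ _ (tcol g)).
- by move=> x y; rewrite !cart_adjN adjN_sym.
- move=> [x1 x2]; rewrite cart_adjN /adjN /= !eqxx /= !sneq //; lia.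
- move=> [[v1 hv1] [v2 hv2]] [[u1 hu1] [u2 hu2]] [[w1 hw1] [w2 hw2]].
  rewrite !cart_adjN /= => A1 A2 neq.
  rewrite /tcol /=; apply: inord_neq; rewrite ?H6 ?dirN_lt4 //.
  apply: H0; rewrite ?dirN_lt4 //.
  apply: contra neq => /eqP deq.
  have [? ?] := dir_inj hm hn hv1 hv2 hu1 hu2 hw1 hw2 A1 A2 deq; subst.
  by rewrite !(eq_irrelevance hu1 hw1) (eq_irrelevance hu2 hw2).
- move=> [[a1 ha1] [a2 ha2]] [[b1 hb1] [b2 hb2]] [[y1 hy1] [y2 hy2]].
  rewrite !cart_adjN /= => A1 A2.
  rewrite /tcol /=; apply: inord_neq; rewrite ?H6 ?dirN_lt4 //.
  have dl := dirN_lt4 m n b1 b2 y1 y2.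
  case: (dirN_spec hm hn ha1 hb1 ha2 hb2 A1) => [[-> [-> ->]]|[[-> [-> ->]]|[[-> [-> ->]]|[-> [-> ->]]]]].
  + by apply: HU; rewrite ?dirN_lt4.
  + by apply: HD; rewrite ?dirN_lt4.
  + by apply: HR; rewrite ?dirN_lt4.
  + by apply: HL; rewrite ?dirN_lt4.
Qed.
Lemma cycle_nth (e : rel nat) s : cycle e s ->
  forall i, i < size s -> e (nth 0 s i) (nth 0 s (i.+1 %% size s)).
Proof.
case: s => [//|x p] /= /(pathP 0) H i hi.
have := H i; rewrite size_rcons => /(_ hi).
rewrite -rcons_cons !nth_rcons /= hi.
case: (ltngtP i (size p)) => h.
- by rewrite modn_small // h.
- lia.
- by rewrite h modnn.
Qed.

Definition loop (e : rel nat) (P : pred nat) x s :=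
  [/\ head x.+1 s = x, cycle e s & all P s].

Lemma loop_cat e P x s1 s2 : loop e P x s1 -> loop e P x s2 -> loop e P x (s1 ++ s2).
Proof.
case: s1 => [[/= h]|y p]; first lia.
case: s2 => [_ [/= h]|z q]; first lia.
move=> [/= -> c1 a1] [/= -> c2 a2]; split => //; last by move: a1 a2; rewrite /= all_cat /= => /andP[-> ->] /andP[_ ->].
move: c1 c2; rewrite /= rcons_cat cat_path /= !rcons_path => /andP[-> ->] /andP[-> ->].
done.
Qed.

Lemma loop_nseq e P x L s a : loop e P x L -> loop e P x s -> loop e P x (flatten (nseq a L) ++ s).
Proof.
move=> hL hs; elim: a => [//|a IH] /=.
by rewrite -catA; apply: loop_cat.
Qed.

Lemma size_fnseq (T : Type) (L : seq T) a : size (flatten (nseq a L)) = a * size L.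
Proof. by elim: a => [//|a IH] /=; rewrite size_cat IH mulSn. Qed.


Definition Ft (L : seq nat) (B a s d : nat) := nth 0 L (a * (B * 4) + s * 4 + d).

Definition chk0 L A B := all (fun a => all (fun s => all (fun d =>
  (Ft L B a s d < 6) && all (fun d' => (d == d') || (Ft L B a s d != Ft L B a s d')) (iota 0 4))
  (iota 0 4)) (iota 0 B)) (iota 0 A).
Definition chkR L B (ER : seq (nat * nat)) := all (fun pr => all (fun s => all (fun d =>
  (Ft L B pr.1 s 0 != Ft L B pr.2 s d) && (Ft L B pr.2 s 1 != Ft L B pr.1 s d))
  (iota 0 4)) (iota 0 B)) ER.
Definition chkS L A B (ES : seq (nat * nat)) := all (fun pr => all (fun a => all (fun d =>
  (Ft L B a pr.1 2 != Ft L B a pr.2 d) && (Ft L B a pr.2 3 != Ft L B a pr.1 d))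
  (iota 0 4)) (iota 0 A)) ES.

Lemma chk0P L A B a s d d' : chk0 L A B -> a < A -> s < B -> d < 4 -> d' < 4 ->
  Ft L B a s d < 6 /\ (d != d' -> Ft L B a s d != Ft L B a s d').
Proof.
move=> /allP/(_ a) + ha hs hd hd'; rewrite mem_iota add0n => /(_ ha).
move=> /allP/(_ s); rewrite mem_iota add0n => /(_ hs).
move=> /allP/(_ d); rewrite mem_iota add0n => /(_ hd) /andP[-> /allP/(_ d')].
rewrite mem_iota add0n => /(_ hd') /orP[/eqP -> | ->] //.
by rewrite eqxx.
Qed.

Lemma chkRP L B ER x y s d : chkR L B ER -> (x, y) \in ER -> s < B -> d < 4 ->
  (Ft L B x s 0 != Ft L B y s d) && (Ft L B y s 1 != Ft L B x s d).
Proof.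
move=> /allP/(_ (x, y)) + hxy hs hd => /(_ hxy).
move=> /allP/(_ s); rewrite mem_iota add0n => /(_ hs).
by move=> /allP/(_ d); rewrite mem_iota add0n => /(_ hd).
Qed.

Lemma chkSP L A B ES x y a d : chkS L A B ES -> (x, y) \in ES -> a < A -> d < 4 ->
  (Ft L B a x 2 != Ft L B a y d) && (Ft L B a y 3 != Ft L B a x d).
Proof.
move=> /allP/(_ (x, y)) + hxy ha hd => /(_ hxy).
move=> /allP/(_ a); rewrite mem_iota add0n => /(_ ha).
by move=> /allP/(_ d); rewrite mem_iota add0n => /(_ hd).
Qed.

Lemma types_ok L A B ER ES rs ts : 3 <= size rs -> 3 <= size ts ->
  [&& chk0 L A B, chkR L B ER & chkS L A B ES] ->
  all (fun x => x < A) rs -> all (fun x => x < B) ts ->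
  cycle (fun x y => (x, y) \in ER) rs -> cycle (fun x y => (x, y) \in ES) ts ->
  incidence_colorable (cart_rel (cycle_rel (size rs)) (cycle_rel (size ts))) 6.
Proof.
move=> hm hn /and3P[C0 CR CS] aR aS cR cS.
have rA i : i < size rs -> nth 0 rs i < A by move=> hi; exact: (all_nthP 0 aR).
have tB j : j < size ts -> nth 0 ts j < B by move=> hj; exact: (all_nthP 0 aS).
have eR := cycle_nth cR; have eS := cycle_nth cS.
have rA' i : i < size rs -> nth 0 rs (i.+1 %% size rs) < A.
  by move=> hi; apply: rA; rewrite ltn_mod; lia.
have tB' j : j < size ts -> nth 0 ts (j.+1 %% size ts) < B.
  by move=> hj; apply: tB; rewrite ltn_mod; lia.
apply: (@torus _ _ (fun i j d => Ft L B (nth 0 rs i) (nth 0 ts j) d)) => //.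
- by move=> i j d hi hj hd; case: (chk0P (d' := 0) C0 (rA i hi) (tB j hj) hd (isT : 0 < 4)).
- by move=> i j d d' hi hj hd hd'; case: (chk0P C0 (rA i hi) (tB j hj) hd hd').
- by move=> i j d hi hj hd; case/andP: (chkRP CR (eR i hi) (tB j hj) hd).
- by move=> i j d hi hj hd; case/andP: (chkRP CR (eR i hi) (tB j hj) hd).
- by move=> i j d hi hj hd; case/andP: (chkSP CS (eS j hj) (rA i hi) hd).
- by move=> i j d hi hj hd; case/andP: (chkSP CS (eS j hj) (rA i hi) hd).
Qed.

Definition L1 : seq nat := [:: 2; 3; 0; 1; 3; 2; 1; 4; 5; 2; 4; 0; 1; 2; 5; 4; 2; 1; 3; 0; 0; 2; 4; 5; 3; 4; 0; 1; 4; 5; 1; 2; 4; 3; 2; 0; 4; 3; 5; 2; 3; 4; 1; 0; 4; 3; 2; 5; 0; 2; 4; 5; 2; 3; 5; 1; 2; 1; 3; 0; 2; 0; 3; 1; 0; 2; 5; 4; 2; 0; 1; 3; 4; 1; 2; 5; 0; 4; 5; 3; 3; 4; 0; 1; 3; 4; 1; 0; 4; 3; 5; 2; 3; 4; 0; 1].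
Definition L2 : seq nat := [:: 0; 1; 2; 3; 0; 1; 3; 4; 1; 0; 4; 2; 0; 1; 5; 3; 1; 0; 4; 2; 2; 4; 1; 5; 4; 2; 5; 3; 2; 3; 4; 0; 3; 2; 5; 1; 2; 3; 0; 4; 1; 0; 4; 3; 1; 0; 5; 2; 0; 1; 3; 4; 1; 0; 2; 5; 0; 1; 5; 4; 3; 2; 0; 4; 2; 3; 4; 5; 3; 2; 5; 1; 2; 3; 0; 4; 3; 2; 1; 5; 0; 1; 2; 4; 1; 0; 4; 3; 1; 0; 2; 5; 0; 1; 3; 4; 1; 0; 5; 2; 2; 3; 1; 4; 3; 2; 4; 0; 2; 3; 0; 5; 3; 2; 4; 1; 2; 3; 0; 5; 1; 0; 3; 4; 0; 1; 4; 2; 0; 1; 3; 5; 1; 0; 2; 4; 0; 1; 5; 3; 4; 5; 0; 2; 2; 5; 4; 3; 3; 2; 5; 1; 2; 3; 0; 4; 3; 4; 1; 5; 3; 2; 0; 4; 2; 3; 4; 1; 3; 2; 1; 5; 2; 3; 4; 0; 3; 2; 1; 5].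
Definition ER1 : seq (nat * nat) := [:: (0,1); (1,2); (2,3); (3,0)].
Definition ES1 : seq (nat * nat) := [:: (0,1); (1,2); (2,0); (0,3); (3,4); (4,5); (5,0)].
Definition ER2 : seq (nat * nat) :=
  [:: (0,1); (1,2); (2,3); (3,4); (4,5); (5,6); (6,7); (7,0); (6,8); (8,4)].
Definition ES2 : seq (nat * nat) := [:: (0,1); (1,2); (2,3); (3,4); (4,0)].

Lemma chk1 : [&& chk0 L1 4 6, chkR L1 6 ER1 & chkS L1 4 6 ES1].
Proof. by vm_compute. Qed.
Lemma chk2 : [&& chk0 L2 9 5, chkR L2 5 ER2 & chkS L2 9 5 ES2].
Proof. by vm_compute. Qed.

Definition rs1 k := flatten (nseq k.-1 [:: 0; 1; 2; 3]) ++ [:: 0; 1; 2; 3].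
Definition L3 := [:: 0; 1; 2].
Definition L4 := [:: 0; 3; 4; 5].
Definition ts1 n :=
  if n %% 3 == 0 then flatten (nseq (n %/ 3).-1 L3) ++ L3
  else if n %% 3 == 1 then flatten (nseq (n %/ 3 - 1) L3) ++ L4
  else flatten (nseq (n %/ 3 - 2) L3) ++ (L4 ++ L4).
Definition rs2 k := flatten (nseq (k - 2) [:: 4; 5; 6; 8]) ++ [:: 4; 5; 6; 7; 0; 1; 2; 3].
Definition ts2 := [:: 0; 1; 2; 3; 4].

Lemma loop_cycle e P x s : loop e P x s -> cycle e s /\ all P s.
Proof. by case. Qed.

Theorem lemma2 (k n : nat) :
  1 <= k -> 3 <= n -> (k, n) <> (1, 5) ->
  incidence_colorable (cart_rel (cycle_rel (4 * k)) (cycle_rel n)) 6.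
Proof.
move=> hk hn hkn.
case: (eqVneq n 5) => [n5|n5].
- subst n.
  have k2 : 2 <= k by case: k hk hkn => [|[|k]] //.
  have -> : 4 * k = size (rs2 k) by rewrite /rs2 size_cat size_fnseq /=; lia.
  have -> : 5 = size ts2 by split.
  have [c1 a1] := loop_cycle (loop_nseq (k - 2)
     (ltac:(by split) : loop (fun x y => (x, y) \in ER2) (fun x => x < 9) 4 [:: 4; 5; 6; 8])
     (ltac:(by split) : loop (fun x y => (x, y) \in ER2) (fun x => x < 9) 4 [:: 4; 5; 6; 7; 0; 1; 2; 3])).
  apply: (types_ok (ER := ER2) (ES := ES2)) chk2 a1 _ c1 _ => //.
  by rewrite /rs2 size_cat size_fnseq /=; lia.
- have -> : 4 * k = size (rs1 k) by rewrite /rs1 size_cat size_fnseq /=; lia.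
  have -> : n = size (ts1 n).
    rewrite /ts1; case: ifP => [/eqP h|/negbT h1]; [|case: ifP => [/eqP h|/negbT h2]];
    rewrite !size_cat !size_fnseq /=; lia.
  have [c1 a1] := loop_cycle (loop_nseq k.-1
     (ltac:(by split) : loop (fun x y => (x, y) \in ER1) (fun x => x < 4) 0 [:: 0; 1; 2; 3])
     (ltac:(by split) : loop (fun x y => (x, y) \in ER1) (fun x => x < 4) 0 [:: 0; 1; 2; 3])).
  have l3 : loop (fun x y => (x, y) \in ES1) (fun x => x < 6) 0 L3 by split.
  have l4 : loop (fun x y => (x, y) \in ES1) (fun x => x < 6) 0 L4 by split.
  have [c2 a2] : cycle (fun x y => (x, y) \in ES1) (ts1 n) /\ all (fun x => x < 6) (ts1 n).
    rewrite /ts1; case: ifP => _; [|case: ifP => _]; apply: (loop_cycle (x := 0)); apply: loop_nseq => //.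
  apply: (types_ok (ER := ER1) (ES := ES1)) chk1 a1 a2 c1 c2.
  - by rewrite /rs1 size_cat size_fnseq /=; lia.
  - rewrite /ts1; case: ifP => [/eqP h|/negbT h1]; [|case: ifP => [/eqP h|/negbT h2]];
    rewrite !size_cat !size_fnseq /=; lia.
Qed.
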